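(* Let $V$ be a module of the intermediate series over $\mathcal{L}[\frac12]$ on which $c$ acts as $0$ and on which $\mathcal{S}=\mathrm{span}\{Y_p,M_n\}$ acts nontrivially, and suppose $V$ has a basis $\{x_k\mid k\in\frac12\mathbb{Z}\}$ and there are $a,b,b'\in\mathbb{C}$ and $f_{p,k},g_{n,k}\in\mathbb{C}$ such that, for all $p\in\frac12+\mathbb{Z}$, $n\in\mathbb{Z}$, $k\in\frac12\mathbb{Z}$: $Y_px_k=f_{p,k}x_{k+p}$, $M_nx_k=g_{n,k}x_{k+n}$, $L_nx_k=(a+k+bn)x_{k+n}$ if $k\in\mathbb{Z}$ and $L_nx_k=(a+k+b'n)x_{k+n}$ if $k\in\frac12+\mathbb{Z}$. Then $b'=b+\frac12$, or $b'=b-\frac12$, or $(b,b')\in\{(0,\frac32),(\frac32,0),(1,-\frac12),(-\frac12,1)\}$.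
   Context: $\mathcal{L}[\frac12]$ is the complex Lie algebra with basis $\{L_m,Y_p,M_n,c\mid m,n\in\mathbb{Z},\ p\in\frac12+\mathbb{Z}\}$ and brackets $[L_m,L_{m'}]=(m'-m)L_{m+m'}+\delta_{m,-m'}\frac{m^3-m}{12}c$, $[L_m,Y_p]=(p-\frac m2)Y_{p+m}$, $[L_m,M_n]=nM_{n+m}$, $[Y_p,Y_{p'}]=(p'-p)M_{p+p'}$, $[Y_p,M_n]=[M_n,M_{n'}]=0$, $c$ central. With $\mathcal{H}=\mathrm{span}\{L_0,M_0,c\}$, a module of the intermediate series is an indecomposable module $V=\bigoplus_{\lambda\in\mathcal{H}^*}V^\lambda$, $V^\lambda=\{v\mid xv=\lambda(x)v\ \forall x\in\mathcal{H}\}$, with $\dim V^\lambda\le1$ for all $\lambda$. *)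

(* Defs.v *)
From HB Require Import structures.
From mathcomp Require Import all_boot all_order all_algebra.
Set Implicit Arguments. Unset Strict Implicit. Unset Printing Implicit Defensive.
Import Order.TTheory GRing.Theory Num.Theory.
Local Open Scope ring_scope.

(* Index conventions:
   - L_m, M_n with m, n : int;
   - Y_p with p in 1/2 + Z is encoded by i : int with p = i + 1/2;
   - basis vector x_k with k in (1/2)Z is encoded by j : int with k = j/2. *)

Section Lhalf.
Variables (C : numClosedFieldType) (V : lmodType C).

Definition op_linear (T : V -> V) : Prop :=
  forall (al : C) (u v : V), T (al *: u + v) = al *: T u + T v.

Definition is_Lhalf_module (L Y M : int -> V -> V) (cc : V -> V) : Prop :=
  [/\ (forall m, op_linear (L m)), (forall i, op_linear (Y i)),
      (forall n, op_linear (M n)), op_linear cc &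
  [/\
      (forall m m' v, L m (L m' v) - L m' (L m v) =
        (m' - m)%:~R *: L (m + m') v +
        (if m == - m' then ((m ^+ 3 - m)%:~R / 12%:R) else 0) *: cc v),
      (forall m i v, L m (Y i v) - Y i (L m v) =
        (i%:~R + 1 / 2%:R - m%:~R / 2%:R) *: Y (i + m) v),
      (forall m n v, L m (M n v) - M n (L m v) = n%:~R *: M (n + m) v),
      (forall i i' v, Y i (Y i' v) - Y i' (Y i v) = (i' - i)%:~R *: M (i + i' + 1) v) &
      [/\
      (forall i n v, Y i (M n v) = M n (Y i v)),
      (forall n n' v, M n (M n' v) = M n' (M n v)),
      (forall m v, cc (L m v) = L m (cc v)),
      (forall i v, cc (Y i v) = Y i (cc v)) &
      (forall n v, cc (M n v) = M n (cc v))]]].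

(* Weight vectors for H = span{L_0, M_0, c}; a weight lambda in H^* is
   given by its values (lambda(L_0), lambda(M_0), lambda(c)). *)
Definition in_weight_space (L M : int -> V -> V) (cc : V -> V)
    (lam : C * C * C) (v : V) : Prop :=
  [/\ L 0 v = lam.1.1 *: v, M 0 v = lam.1.2 *: v & cc v = lam.2 *: v].

Definition is_submodule (L Y M : int -> V -> V) (cc : V -> V) (W : V -> Prop) :=
  [/\ W 0, (forall u v, W u -> W v -> W (u + v)),
      (forall (al : C) v, W v -> W (al *: v)),
      (forall m v, W v -> W (L m v)) &
      [/\ (forall i v, W v -> W (Y i v)),
      (forall n v, W v -> W (M n v)) & (forall v, W v -> W (cc v))]].

Definition indecomposable (L Y M : int -> V -> V) (cc : V -> V) : Prop :=
  (exists v : V, v != 0) /\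
  forall W1 W2 : V -> Prop,
    is_submodule L Y M cc W1 -> is_submodule L Y M cc W2 ->
    (forall v, W1 v -> W2 v -> v = 0) ->
    (forall v, exists w1 w2, [/\ W1 w1, W2 w2 & v = w1 + w2]) ->
    (forall v, W1 v -> v = 0) \/ (forall v, W2 v -> v = 0).

Definition intermediate_series (L Y M : int -> V -> V) (cc : V -> V) : Prop :=
  [/\ indecomposable L Y M cc,
      (forall v, exists (s : seq (C * C * C)) (w : C * C * C -> V),
          (forall lam, in_weight_space L M cc lam (w lam)) /\
          v = \sum_(lam <- s) w lam),
      (forall (s : seq (C * C * C)) (w : C * C * C -> V), uniq s ->
          (forall lam, in_weight_space L M cc lam (w lam)) ->
          \sum_(lam <- s) w lam = 0 -> forall lam, lam \in s -> w lam = 0) &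
      (forall lam u v, in_weight_space L M cc lam u -> in_weight_space L M cc lam v ->
          exists al be : C, ((al != 0) || (be != 0)) /\ al *: u + be *: v = 0)].

Definition is_basis (x : int -> V) : Prop :=
  (forall (s : seq int) (co : int -> C), uniq s ->
      \sum_(j <- s) co j *: x j = 0 -> forall j, j \in s -> co j = 0) /\
  (forall v, exists (s : seq int) (co : int -> C), v = \sum_(j <- s) co j *: x j).

End Lhalf.

(* Main.v *)
From HB Require Import structures.
From mathcomp Require Import all_boot all_order all_algebra.
Require Import Defs.
From Stdlib Require Import Ring Field Classical.
Import Order.TTheory GRing.Theory Num.Theory.
Set Implicit Arguments. Unset Strict Implicit. Unset Printing Implicit Defensive.
Local Open Scope ring_scope.


Definition iadd (x y : int) : int := x + y.
Definition imul (x y : int) : int := x * y.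
Definition iopp (x : int) : int := - x.
Definition isub (x y : int) : int := iadd x (iopp y).
Definition i0 : int := 0.
Definition i1 : int := 1.
Lemma Iring : ring_theory i0 i1 iadd imul isub iopp eq.
Proof. rewrite /iadd/imul/isub/iopp/i0/i1; split=> //.
exact: add0r. exact: addrC. exact: addrA. exact: mul1r. exact: mulrC. exact: mulrA. exact: mulrDl. exact: subrr. Qed.
Add Ring Ir : Iring.
Lemma iaddE (x y : int) : x + y = iadd x y. Proof. by []. Qed.
Lemma imulE (x y : int) : x * y = imul x y. Proof. by []. Qed.
Lemma ioppE (x : int) : - x = iopp x. Proof. by []. Qed.
Lemma natIE (n : nat) : n.+1%:R = iadd i1 (n%:R) :> int. Proof. by rewrite mulrS. Qed.
Lemma natI0 : 0%:R = i0 :> int. Proof. by []. Qed.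
Lemma i1E : 1 = i1. Proof. by []. Qed.
Lemma i0E : 0 = i0. Proof. by []. Qed.
Ltac inorm := match goal with |- @eq _ ?x ?y => change (@eq int x y) end;
  rewrite ?iaddE ?imulE ?ioppE ?natIE ?natI0 ?i1E ?i0E.

Lemma oddz_dvd (z : int) : odd (absz z) = ~~ (2 %| z)%Z.
Proof. by rewrite dvdzE /= dvdn2 negbK. Qed.
Lemma odd2 (z w : int) : odd (absz (z + 2 * w)) = odd (absz z).
Proof.
rewrite !oddz_dvd; congr (~~ _).
have h2 : (2 %| 2 * w)%Z by apply: dvdz_mulr; exact: dvdzz.
apply/idP/idP => h.
  have := rpredB h h2. by rewrite addrK.
exact: rpredD.
Qed.
Lemma odd1 (z : int) : odd (absz (z + 1)) = ~~ odd (absz z).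
Proof.
have ez : z = (z %% 2)%Z + 2 * (z %/ 2)%Z by rewrite addrC mulrC -divz_eq.
have h0 : 0 <= (z %% 2)%Z by apply: modz_ge0.
have h1 : (z %% 2)%Z < 2 by apply: ltz_pmod.
rewrite ez -addrAC !odd2.
case: (z %% 2)%Z h0 h1 => // -[|[|n]] //.
Qed.

Section Core.
Variable C : numClosedFieldType.
Notation CC := (Num.ClosedField.sort C).
Definition cadd (x y : CC) : CC := x + y.
Definition cmul (x y : CC) : CC := x * y.
Definition copp (x : CC) : CC := - x.
Definition cinv (x : CC) : CC := x^-1.
Definition csub (x y : CC) : CC := cadd x (copp y).
Definition cdiv (x y : CC) : CC := cmul x (cinv y).
Definition c0 : CC := 0.
Definition c1 : CC := 1.
Lemma Cring : ring_theory c0 c1 cadd cmul csub copp eq.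
Proof. rewrite /cadd/cmul/csub/copp/c0/c1/cadd; split=> //.
exact: add0r. exact: addrC. exact: addrA. exact: mul1r. exact: mulrC. exact: mulrA. exact: mulrDl. exact: subrr. Qed.
Lemma Cfield : field_theory c0 c1 cadd cmul csub copp cdiv cinv eq.
Proof. constructor. exact: Cring. rewrite /c0/c1; by apply/eqP; rewrite oner_eq0. by []. by move=> p /eqP Hp; exact: mulVf. Qed.
Add Field Cf : Cfield.
Lemma caddE (x y : CC) : x + y = cadd x y. Proof. by []. Qed.
Lemma cmulE (x y : CC) : x * y = cmul x y. Proof. by []. Qed.
Lemma coppE (x : CC) : - x = copp x. Proof. by []. Qed.
Lemma cinvE (x : CC) : x^-1 = cinv x. Proof. by []. Qed.
Lemma c0E : 0 = c0 :> CC. Proof. by []. Qed.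
Lemma c1E : 1 = c1 :> CC. Proof. by []. Qed.
Lemma natE (n : nat) : n.+1%:R = cadd c1 (n%:R) :> CC. Proof. by rewrite mulrS. Qed.
Lemma nat0E : 0%:R = c0 :> CC. Proof. by []. Qed.
Lemma two_neq0 : cadd c1 c1 <> c0.
Proof. rewrite /cadd/c1/c0 -mulr2n; apply/eqP; by rewrite pnatr_eq0. Qed.
Ltac cnorm := match goal with |- @eq _ ?x ?y => change (@eq CC x y) end;
  rewrite ?expr2 ?natE ?nat0E ?caddE ?cmulE ?coppE ?cinvE ?c0E ?c1E.

Definition cint (z : int) : CC := z%:~R.
Lemma cintE (z : int) : z%:~R = cint z. Proof. by []. Qed.
Ltac castn := rewrite ?intrD ?intrB ?intrN ?intrM ?mulrz_nat -?pmulrn ?mulr1z ?mulr0z ?cintE.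
Lemma sub0_eq (x y : CC) : x - y = 0 -> x = y.
Proof. by move/eqP; rewrite subr_eq0 => /eqP. Qed.
Lemma eq_sub0 (x y : CC) : x = y -> x - y = 0.
Proof. by move=> ->; rewrite subrr. Qed.
Lemma natr_neq0 (n : nat) : (n.+1)%:R != 0 :> CC.
Proof. by rewrite pnatr_eq0. Qed.
Lemma mul0_l (g p : CC) : g != 0 -> g * p = 0 -> p = 0.
Proof. by move=> hg /eqP; rewrite mulf_eq0 (negbTE hg) => /eqP. Qed.
Lemma lin1 (x y k z : CC) : x - y = k * z -> z = 0 -> x = y.
Proof. by move=> h hz; apply: sub0_eq; rewrite h hz mulr0. Qed.
Lemma dz (a b d n : CC) : a * d - b * n = 0 -> d = 0 -> b * n = 0.
Proof. by move=> h hd; move: h; rewrite hd mulr0 sub0r => /eqP; rewrite oppr_eq0 => /eqP. Qed.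
Lemma az (a b d n : CC) : a * d - b * n = 0 -> a = 0 -> b * n = 0.
Proof. by move=> h ha; move: h; rewrite ha mul0r sub0r => /eqP; rewrite oppr_eq0 => /eqP. Qed.
Lemma bz (a b d n : CC) : a * d - b * n = 0 -> b = 0 -> a * d = 0.
Proof. by move=> h hb; move: h; rewrite hb mul0r subr0. Qed.

Lemma core (X B Gm G0 G1 G2 G3 H0 H1 F0 F1 W : CC) :
 G0 != 0 ->
 G1 * (X + 1 - Gm) = G0 * (X + 2%:R - B) ->
 G2 * (X + 3%:R - Gm) = G1 * (X + 4%:R - B) ->
 G3 * (X + 5%:R - Gm) = G2 * (X + 6%:R - B) ->
 G0 * (X - 1 + Gm) - G1 * (X + B) = - (2%:R * H0) ->
 G1 * (X + 1 + Gm) - G2 * (X + 2%:R + B) = - (2%:R * H1) ->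
 G0 * (X - 1 + 2%:R * Gm) - G2 * (X + 2%:R * B) = - (3%:R * F0) ->
 G1 * (X + 1 + 2%:R * Gm) - G3 * (X + 2%:R + 2%:R * B) = - (3%:R * F1) ->
 G0 * (X - 1 + 3%:R * Gm) - G3 * (X + 3%:R * B) = - (4%:R * W) ->
 H0 * (X + 1 + Gm) - H1 * (X + B) = 0 ->
 F0 * (X + 3%:R + Gm) - F1 * (X + B) = 2%:R * W ->
 Gm = B + 1 \/ Gm = B - 1 \/ (B = 0 /\ Gm = 3%:R) \/ (B = 3%:R /\ Gm = 0) \/
 (B = 2%:R /\ Gm = -1) \/ (B = -1 /\ Gm = 2%:R).
Proof.
move=> nz /eq_sub0 E11 /eq_sub0 E12 /eq_sub0 E13 /eq_sub0 EH0 /eq_sub0 EH1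
  /eq_sub0 EF0 /eq_sub0 EF1 /eq_sub0 EW /eq_sub0 R2 /eq_sub0 R5.

set d1 := X + 1 - Gm in E11 *. set n1 := X + 2%:R - B in E11 *. set d2 := X + 3%:R - Gm in E12 *.
set n2 := X + 4%:R - B in E12 *. set d3 := X + 5%:R - Gm in E13 *. set n3 := X + 6%:R - B in E13 *.
case: (eqVneq d1 0) => [d1z|d1nz].
  have n1z : n1 = 0 by apply: (mul0_l nz); exact: (dz E11 d1z).
  right; left; apply: sub0_eq.
  rewrite (_ : Gm - (B - 1) = n1 - d1); first by rewrite n1z d1z subrr.
  rewrite /n1 /d1; cnorm; ring.
case: (eqVneq d2 0) => [d2z|d2nz].
  move/eqP: (dz E12 d2z); rewrite mulf_eq0 => /orP [/eqP G1z|/eqP n2z].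
    have n1z : n1 = 0 by apply: (mul0_l nz); exact: (az E11 G1z).
    left; apply: sub0_eq.
    rewrite (_ : Gm - (B + 1) = n1 - d2); first by rewrite n1z d2z subrr.
    rewrite /n1 /d2; cnorm; ring.
  right; left; apply: sub0_eq.
  rewrite (_ : Gm - (B - 1) = n2 - d2); first by rewrite n2z d2z subrr.
  rewrite /n2 /d2; cnorm; ring.
case: (eqVneq d3 0) => [d3z|d3nz].
  move/eqP: (dz E13 d3z); rewrite mulf_eq0 => /orP [/eqP G2z|/eqP n3z]; last first.
    right; left; apply: sub0_eq.
    rewrite (_ : Gm - (B - 1) = n3 - d3); first by rewrite n3z d3z subrr.
    rewrite /n3 /d3; cnorm; ring.
  move/eqP: (az E12 G2z); rewrite mulf_eq0 => /orP [/eqP G1z|/eqP n2z]; last first.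
    left; apply: sub0_eq.
    rewrite (_ : Gm - (B + 1) = n2 - d3); first by rewrite n2z d3z subrr.
    rewrite /n2 /d3; cnorm; ring.
  have n1z : n1 = 0 by apply: (mul0_l nz); exact: (az E11 G1z).
  have H1z : H1 = 0.
    apply: (mul0_l (natr_neq0 1)); apply/eqP; rewrite -oppr_eq0; apply/eqP.
    by rewrite -(sub0_eq EH1) G1z G2z !mul0r subrr.
  have hH0 : G0 * (X - 1 + Gm) = - (2%:R * H0).
    by apply: sub0_eq; rewrite -EH0 G1z mul0r subr0.
  have h : G0 * ((X - 1 + Gm) * (X + 1 + Gm)) = 0.
    rewrite mulrA hH0 mulNr -mulrA.
    move: R2; rewrite H1z mul0r !subr0 => ->; by rewrite mulr0 oppr0.
  move/(mul0_l nz)/eqP: h; rewrite mulf_eq0 => /orP [/eqP a0z|/eqP a1z].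
    right; right; left; split.
      apply: sub0_eq; apply: (mul0_l (natr_neq0 1)).
      rewrite (_ : 2%:R * (B - 0) = (X - 1 + Gm) + d3 - 2%:R * n1); first by rewrite a0z n1z d3z !mulr0 !addr0 subrr.
      rewrite /n1 /d3; cnorm; ring.
    apply: sub0_eq; apply: (mul0_l (natr_neq0 1)).
    rewrite (_ : 2%:R * (Gm - 3%:R) = (X - 1 + Gm) - d3); first by rewrite a0z d3z subrr.
    rewrite /d3; cnorm; ring.
  right; right; right; right; right; split.
    apply: sub0_eq; apply: (mul0_l (natr_neq0 1)).
    rewrite (_ : 2%:R * (B - -1) = (X + 1 + Gm) + d3 - 2%:R * n1); first by rewrite a1z n1z d3z !mulr0 !addr0 subrr.
    rewrite /n1 /d3; cnorm; ring.
  apply: sub0_eq; apply: (mul0_l (natr_neq0 1)).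
  rewrite (_ : 2%:R * (Gm - 2%:R) = (X + 1 + Gm) - d3); first by rewrite a1z d3z subrr.
  rewrite /d3; cnorm; ring.
have k2 : G0 * ((Gm - B - 1) * (Gm - B + 1) * (B + Gm - 3%:R) * (B + Gm - 1)) = 0.
  rewrite (_ : G0 * _ = (- (d1 * d2 * (2%:R * (H0 * (X + 1 + Gm) - H1 * (X + B) - 0) - (G0 * (X - 1 + Gm) - G1 * (X + B) - - (2%:R * H0)) * (X + 1 + Gm) + (G1 * (X + 1 + Gm) - G2 * (X + 2%:R + B) - - (2%:R * H1)) * (X + B))) + d1 * (- ((X + 2%:R + B) * (X + B))) * (G2 * d2 - G1 * n2) + (((X + B) * (X + 1 + Gm) + (X + 1 + Gm) * (X + B)) * d2 + (- ((X + 2%:R + B) * (X + B))) * n2) * (G1 * d1 - G0 * n1))); last by rewrite /d1 /n1 /d2 /n2; cnorm; ring.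
  by rewrite E11 E12 EH0 EH1 R2; cnorm; ring.
have k5 : G0 * ((- (4%:R * (X - 1 + 2%:R * Gm) * (X + 3%:R + Gm)) + 6%:R * (X - 1 + 3%:R * Gm)) * d1 * d2 * d3 + ((4%:R * (X + 1 + 2%:R * Gm) * (X + B)) * d2 * d3 + ((4%:R * (X + 2%:R * B) * (X + 3%:R + Gm)) * d3 + (- (4%:R * (X + 2%:R + 2%:R * B) * (X + B)) - 6%:R * (X + 3%:R * B)) * n3) * n2) * n1) = 0.
  rewrite (_ : G0 * _ = (d1 * d2 * d3 * (12%:R * (F0 * (X + 3%:R + Gm) - F1 * (X + B) - 2%:R * W) - 4%:R * (G0 * (X - 1 + 2%:R * Gm) - G2 * (X + 2%:R * B) - - (3%:R * F0)) * (X + 3%:R + Gm) + 4%:R * (G1 * (X + 1 + 2%:R * Gm) - G3 * (X + 2%:R + 2%:R * B) - - (3%:R * F1)) * (X + B) + 6%:R * (G0 * (X - 1 + 3%:R * Gm) - G3 * (X + 3%:R * B) - - (4%:R * W))) - d1 * d2 * (- (4%:R * (X + 2%:R + 2%:R * B) * (X + B)) - 6%:R * (X + 3%:R * B)) * (G3 * d3 - G2 * n3) - d1 * ((4%:R * (X + 2%:R * B) * (X + 3%:R + Gm)) * d3 + (- (4%:R * (X + 2%:R + 2%:R * B) * (X + B)) - 6%:R * (X + 3%:R * B)) * n3) * (G2 * d2 - G1 * n2) - ((4%:R * (X + 1 + 2%:R * Gm) * (X + B)) * d2 * d3 + ((4%:R * (X + 2%:R * B) * (X + 3%:R + Gm))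 * d3 + (- (4%:R * (X + 2%:R + 2%:R * B) * (X + B)) - 6%:R * (X + 3%:R * B)) * n3) * n2) * (G1 * d1 - G0 * n1))); last by rewrite /d1 /n1 /d2 /n2 /d3 /n3; cnorm; ring.
  by rewrite E11 E12 E13 EF0 EF1 EW R5; cnorm; ring.
move/(mul0_l nz): k5 => k5.
move/(mul0_l nz)/eqP: k2; rewrite !mulf_eq0 => /orP[/orP[/orP[/eqP h|/eqP h]|/eqP h]|/eqP h].
- left; apply: (lin1 (k := 1) _ h); cnorm; ring.
- right; left; apply: (lin1 (k := 1) _ h); cnorm; ring.
- have eG : Gm = 3%:R - B by apply: (lin1 (k := 1) _ h); cnorm; ring.
  have : 32%:R * (B * (B - 1) * (B - 2%:R) * (B - 3%:R)) = 0.
    by rewrite -k5 /d1 /n1 /d2 /n2 /d3 /n3 eG; cnorm; ring.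
  move/(mul0_l (natr_neq0 31))/eqP; rewrite !mulf_eq0 => /orP[/orP[/orP[/eqP hb|/eqP hb]|/eqP hb]|/eqP hb].
  + by right; right; left; split=> //; rewrite eG hb subr0.
  + left; apply: (lin1 (k := - 2%:R) _ hb); rewrite eG; cnorm; ring.
  + right; left; apply: (lin1 (k := - 2%:R) _ hb); rewrite eG; cnorm; ring.
  + right; right; right; left; split; first by apply: (lin1 (k := 1) _ hb); cnorm; ring.
    apply: (lin1 (k := - 1) _ hb); rewrite eG; cnorm; ring.
- have eG : Gm = 1 - B by apply: (lin1 (k := 1) _ h); cnorm; ring.
  have : 32%:R * ((B + 1) * B * (B - 1) * (B - 2%:R)) = 0.
    apply/eqP; rewrite -oppr_eq0; apply/eqP.
    by rewrite -k5 /d1 /n1 /d2 /n2 /d3 /n3 eG; cnorm; ring.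
  move/(mul0_l (natr_neq0 31))/eqP; rewrite !mulf_eq0 => /orP[/orP[/orP[/eqP hb|/eqP hb]|/eqP hb]|/eqP hb].
  + right; right; right; right; right; split; first by apply: (lin1 (k := 1) _ hb); cnorm; ring.
    apply: (lin1 (k := - 1) _ hb); rewrite eG; cnorm; ring.
  + left; apply: (lin1 (k := - 2%:R) _ hb); rewrite eG; cnorm; ring.
  + right; left; apply: (lin1 (k := - 2%:R) _ hb); rewrite eG; cnorm; ring.
  + right; right; right; right; left; split; first by apply: (lin1 (k := 1) _ hb); cnorm; ring.
    apply: (lin1 (k := - 1) _ hb); rewrite eG; cnorm; ring.
Qed.


Lemma sc2 (p q r t k : CC) : p = q -> r - t = k * (p - q) -> r = t.
Proof. by move=> h e; apply: sub0_eq; rewrite e h subrr mulr0. Qed.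

Definition concl (b b' : CC) :=
  b' = b + 1 / 2%:R \/ b' = b - 1 / 2%:R \/
  (b = 0 /\ b' = 3%:R / 2%:R) \/ (b = 3%:R / 2%:R /\ b' = 0) \/
  (b = 1 /\ b' = - (1 / 2%:R)) \/ (b = - (1 / 2%:R) /\ b' = 1).
Definition cdisj (B Gm : CC) :=
 Gm = B + 1 \/ Gm = B - 1 \/ (B = 0 /\ Gm = 3%:R) \/ (B = 3%:R /\ Gm = 0) \/
 (B = 2%:R /\ Gm = -1) \/ (B = -1 /\ Gm = 2%:R).
Lemma half (u k : CC) : 2%:R * u = k -> u = k / 2%:R.
Proof. move=> <-; cnorm; field; exact: two_neq0. Qed.

Lemma fin1 (u v : CC) : cdisj (2%:R * u) (2%:R * v) -> concl u v.
Proof.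
rewrite /cdisj /concl.
case=> [h|[h|[[h1 h2]|[[h1 h2]|[[h1 h2]|[h1 h2]]]]]].
- left; rewrite (half h); cnorm; field; exact: two_neq0.
- right; left; rewrite (half h); cnorm; field; exact: two_neq0.
- right; right; left; split.
    by rewrite (half h1) mul0r.
  by rewrite (half h2).
- right; right; right; left; split.
    by rewrite (half h1).
  by rewrite (half h2) mul0r.
- right; right; right; right; left; split.
    by rewrite (half h1) divff // natr_neq0.
  rewrite (half h2); cnorm; field; exact: two_neq0.
- right; right; right; right; right; split.
    rewrite (half h1); cnorm; field; exact: two_neq0.
  by rewrite (half h2) divff // natr_neq0.
Qed.

Lemma fin2 (u v : CC) : cdisj (2%:R * v) (2%:R * u) -> concl u v.
Proof.
rewrite /cdisj /concl.
case=> [h|[h|[[h1 h2]|[[h1 h2]|[[h1 h2]|[h1 h2]]]]]].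
- right; left; rewrite (half h); cnorm; field; exact: two_neq0.
- left; rewrite (half h); cnorm; field; exact: two_neq0.
- right; right; right; left; split.
    by rewrite (half h2).
  by rewrite (half h1) mul0r.
- right; right; left; split.
    by rewrite (half h2) mul0r.
  by rewrite (half h1).
- right; right; right; right; right; split.
    rewrite (half h2); cnorm; field; exact: two_neq0.
  by rewrite (half h1) divff // natr_neq0.
- right; right; right; right; left; split.
    by rewrite (half h2) divff // natr_neq0.
  rewrite (half h1); cnorm; field; exact: two_neq0.
Qed.

Variable V : lmodType C.

Lemma lin0 (T : V -> V) : op_linear T -> T 0 = 0.
Proof.
move=> h; have e := h 1 0 0; rewrite scaler0 addr0 scale1r in e.
by apply: (addrI (T 0)); rewrite addr0 -e.
Qed.
Lemma linZ (T : V -> V) k v : op_linear T -> T (k *: v) = k *: T v.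
Proof. by move=> h; have := h k v 0; rewrite addr0 (lin0 h) addr0. Qed.
Lemma linD (T : V -> V) u v : op_linear T -> T (u + v) = T u + T v.
Proof. by move=> h; have := h 1 u v; rewrite !scale1r. Qed.
Lemma lin_sum (T : V -> V) (s : seq int) (F : int -> V) : op_linear T ->
  T (\sum_(j <- s) F j) = \sum_(j <- s) T (F j).
Proof.
move=> h; elim: s => [|j s IH]; first by rewrite !big_nil (lin0 h).
by rewrite !big_cons (linD _ _ h) IH.
Qed.
Lemma indep1 (x : int -> V) n (k : C) : is_basis x -> k *: x n = 0 -> k = 0.
Proof.
case=> hi _ e; have := hi [:: n] (fun _ => k) erefl.
rewrite big_seq1 => /(_ e n); apply; by rewrite mem_seq1 eqxx.
Qed.

Lemma main_sec (L Y M : int -> V -> V) (cc : V -> V)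
    (x : int -> V) (a b b' : C) (f g : int -> int -> C) :
  is_Lhalf_module L Y M cc ->
  intermediate_series L Y M cc ->
  (forall v, cc v = 0) ->
  ((exists i v, Y i v != 0) \/ (exists n v, M n v != 0)) ->
  is_basis x ->
  (forall i j, Y i (x j) = f i j *: x (j + 2 * i + 1)) ->
  (forall n j, M n (x j) = g n j *: x (j + 2 * n)) ->
  (forall n j, L n (x j) =
     (a + j%:~R / 2%:R + (if odd `|j|%N then b' else b) * n%:~R) *: x (j + 2 * n)) ->
  b' = b + 1 / 2%:R \/ b' = b - 1 / 2%:R \/
  (b = 0 /\ b' = 3%:R / 2%:R) \/ (b = 3%:R / 2%:R /\ b' = 0) \/
  (b = 1 /\ b' = - (1 / 2%:R)) \/ (b = - (1 / 2%:R) /\ b' = 1).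
Proof.
move=> [linL linY linM lincc [hLL hLY hLM hYY [hYM hMM hcL hcY hcM]]]
  hint hcc hnt hbas hYx hMx hLx.
set beta := fun j : int => if odd `|j|%N then b' else b.
have E : forall i m j : int, f i j * (a + (j + 2 * i + 1)%:~R / 2%:R + beta (j + 2 * i + 1) * m%:~R)
   - (a + j%:~R / 2%:R + beta j * m%:~R) * f i (j + 2 * m)
   = (i%:~R + 1 / 2%:R - m%:~R / 2%:R) * f (i + m) j.
  move=> i m j; rewrite /beta; have h := hLY m i (x j).
  rewrite !hYx (linZ _ _ (linL m)) !hLx (linZ _ _ (linY i)) !hYx !scalerA in h.
  rewrite (_ : j + 2 * m + 2 * i + 1 = j + 2 * i + 1 + 2 * m) in h; last by inorm; ring.
  rewrite (_ : j + 2 * (i + m) + 1 = j + 2 * i + 1 + 2 * m) in h; last by inorm; ring.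
  apply: sub0_eq; apply: (indep1 (n := j + 2 * i + 1 + 2 * m) hbas); rewrite !scalerBl.
  by apply/eqP; rewrite subr_eq0; apply/eqP; exact: h.
have Yzero : (forall i j, f i j = 0) -> forall i v, Y i v = 0.
  move=> hf i v; have [s [co ->]] := hbas.2 v.
  rewrite (lin_sum _ _ (linY i)); apply: big1 => j _.
  by rewrite (linZ _ _ (linY i)) hYx hf scale0r scaler0.
have [i0 [j0 nz0]] : exists i j, f i j != 0.
  case: (classic (exists i j, f i j != 0)) => // hno; exfalso.
  have hf : forall i j, f i j = 0.
    move=> i j; apply/eqP; apply/negPn/negP => h; apply: hno; by exists i, j.
  case: hnt => [[i [v]]|[n [v]]]; first by rewrite (Yzero hf) eqxx.
  have hY2 : forall i i' : int, (i' - i)%:~R *: M (i + i' + 1) v = 0.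
    by move=> i i'; rewrite -hYY !(Yzero hf) subrr.
  case: (eqVneq n (-1)) => [->|hn].
    have := hY2 0 (-2); rewrite (_ : 0 + -2 + 1 = -1); last by inorm; ring.
    move/eqP; rewrite scaler_eq0 intr_eq0 => /orP [//|/eqP ->]; by rewrite eqxx.
  have := hY2 n (-1); rewrite (_ : n + -1 + 1 = n); last by inorm; ring.
  move/eqP; rewrite scaler_eq0 intr_eq0 => /orP [h|/eqP ->]; last by rewrite eqxx.
  move=> _; apply: (negP hn); apply/eqP.
  have e : n = (-1) - (-1 - n) by inorm; ring.
  by rewrite e (eqP h) subr0.
have [J nzJ] : exists J, f (-1) J != 0.
  case: (classic (exists J, f (-1) J != 0)) => // hno; exfalso.
  have h1 : forall t : int, f (-1) (j0 + 2 * t) = 0.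
    move=> t; apply/eqP; apply/negPn/negP => h; apply: hno; by exists (j0 + 2 * t).
  have hall : forall i t : int, i != -2 -> f i (j0 + 2 * t) = 0.
    move=> i t hi; have e := E (-1) (i + 1) (j0 + 2 * t).
    rewrite h1 (_ : j0 + 2 * t + 2 * (i + 1) = j0 + 2 * (t + i + 1)) in e; last by inorm; ring.
    rewrite h1 (_ : -1 + (i + 1) = i) in e; last by inorm; ring.
    have hc : (i + 2)%:~R != 0 :> C.
      rewrite intr_eq0; apply: contra hi => /eqP e2; apply/eqP.
      have -> : i = (i + 2) - 2 by inorm; ring.
      by rewrite e2; inorm; ring.
    apply: (mul0_l hc).
    rewrite (_ : _ * _ = - (2%:R * (((-1)%:~R + 1 / 2%:R - (i + 1)%:~R / 2%:R) * f i (j0 + 2 * t)))).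
      by rewrite -e mul0r mulr0 subrr mulr0 oppr0.
    castn; cnorm; field; exact: two_neq0.
  have e := E 0 (-2) j0.
  have z1 : f 0 j0 = 0.
    have -> : j0 = j0 + 2 * 0 by inorm; ring.
    by rewrite hall.
  have z2 : f 0 (j0 + 2 * -2) = 0 by rewrite hall.
  rewrite z1 z2 (_ : (0 : int) + -2 = -2) in e; last by inorm; ring.
  have hm : f (-2) j0 = 0.
    apply: (mul0_l (natr_neq0 2)).
    rewrite (_ : 3%:R * f (-2) j0 = 2%:R * ((0%:~R + 1 / 2%:R - (-2)%:~R / 2%:R) * f (-2) j0)).
      by rewrite -e mul0r mulr0 subrr mulr0.
    castn; cnorm; field; exact: two_neq0.
  move: nz0; case: (eqVneq i0 (-2)) => [->|hi]; first by rewrite hm eqxx.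
  by rewrite (_ : j0 = j0 + 2 * 0) ?hall ?eqxx //; inorm; ring.
have Ei : forall (i m j j1 j2 i2 : int), j1 = j + 2 * i + 1 -> j2 = j + 2 * m -> i2 = i + m ->
  f i j * (a + j1%:~R / 2%:R + beta j1 * m%:~R) - (a + j%:~R / 2%:R + beta j * m%:~R) * f i j2
  = (i%:~R + 1 / 2%:R - m%:~R / 2%:R) * f i2 j.
  by move=> i m j j1 j2 i2 -> -> ->; exact: E.
have hb0 : forall s : int, beta (J + 2 * s) = beta J by move=> s; rewrite /beta odd2.
have hb1 : forall s : int, beta (J + 1 + 2 * s) = beta (J + 1) by move=> s; rewrite /beta odd2.
have nz' : f (-1) (J + 2 * 0) != 0 by rewrite (_ : J + 2 * 0 = J) //; inorm; ring.
have D : cdisj (2%:R * beta J) (2%:R * beta (J + 1)).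
  rewrite /cdisj; apply: (@core (2%:R * a + J%:~R) (2%:R * beta J) (2%:R * beta (J + 1))
  (f (-1) (J + 2 * 0)) (f (-1) (J + 2 * 1)) (f (-1) (J + 2 * 2)) (f (-1) (J + 2 * 3))
  (f 0 (J + 2 * 0)) (f 0 (J + 2 * 1)) (f 1 (J + 2 * 0)) (f 1 (J + 2 * 1)) (f 2 (J + 2 * 0)) nz').
- have h := Ei (-1) (-1) (J + 2 * 1) (J + 1 + 2 * 0) (J + 2 * 0) (-2) (ltac:(inorm; ring)) (ltac:(inorm; ring)) (ltac:(inorm; ring)).
  rewrite ?hb0 ?hb1 in h.
  apply: (sc2 (k := 2%:R) h); castn; cnorm; field; exact: two_neq0.
- have h := Ei (-1) (-1) (J + 2 * 2) (J + 1 + 2 * 1) (J + 2 * 1) (-2) (ltac:(inorm; ring)) (ltac:(inorm; ring)) (ltac:(inorm; ring)).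
  rewrite ?hb0 ?hb1 in h.
  apply: (sc2 (k := 2%:R) h); castn; cnorm; field; exact: two_neq0.
- have h := Ei (-1) (-1) (J + 2 * 3) (J + 1 + 2 * 2) (J + 2 * 2) (-2) (ltac:(inorm; ring)) (ltac:(inorm; ring)) (ltac:(inorm; ring)).
  rewrite ?hb0 ?hb1 in h.
  apply: (sc2 (k := 2%:R) h); castn; cnorm; field; exact: two_neq0.
- have h := Ei (-1) 1 (J + 2 * 0) (J + 1 + 2 * (-1)) (J + 2 * 1) 0 (ltac:(inorm; ring)) (ltac:(inorm; ring)) (ltac:(inorm; ring)).
  rewrite ?hb0 ?hb1 in h.
  apply: (sc2 (k := 2%:R) h); castn; cnorm; field; exact: two_neq0.
- have h := Ei (-1) 1 (J + 2 * 1) (J + 1 + 2 * 0) (J + 2 * 2) 0 (ltac:(inorm; ring)) (ltac:(inorm; ring)) (ltac:(inorm; ring)).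
  rewrite ?hb0 ?hb1 in h.
  apply: (sc2 (k := 2%:R) h); castn; cnorm; field; exact: two_neq0.
- have h := Ei (-1) 2 (J + 2 * 0) (J + 1 + 2 * (-1)) (J + 2 * 2) 1 (ltac:(inorm; ring)) (ltac:(inorm; ring)) (ltac:(inorm; ring)).
  rewrite ?hb0 ?hb1 in h.
  apply: (sc2 (k := 2%:R) h); castn; cnorm; field; exact: two_neq0.
- have h := Ei (-1) 2 (J + 2 * 1) (J + 1 + 2 * 0) (J + 2 * 3) 1 (ltac:(inorm; ring)) (ltac:(inorm; ring)) (ltac:(inorm; ring)).
  rewrite ?hb0 ?hb1 in h.
  apply: (sc2 (k := 2%:R) h); castn; cnorm; field; exact: two_neq0.
- have h := Ei (-1) 3 (J + 2 * 0) (J + 1 + 2 * (-1)) (J + 2 * 3) 2 (ltac:(inorm; ring)) (ltac:(inorm; ring)) (ltac:(inorm; ring)).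
  rewrite ?hb0 ?hb1 in h.
  apply: (sc2 (k := 2%:R) h); castn; cnorm; field; exact: two_neq0.
- have h := Ei 0 1 (J + 2 * 0) (J + 1 + 2 * 0) (J + 2 * 1) 1 (ltac:(inorm; ring)) (ltac:(inorm; ring)) (ltac:(inorm; ring)).
  rewrite ?hb0 ?hb1 in h.
  apply: (sc2 (k := 2%:R) h); castn; cnorm; field; exact: two_neq0.
- have h := Ei 1 1 (J + 2 * 0) (J + 1 + 2 * 1) (J + 2 * 1) 2 (ltac:(inorm; ring)) (ltac:(inorm; ring)) (ltac:(inorm; ring)).
  rewrite ?hb0 ?hb1 in h.
  apply: (sc2 (k := 2%:R) h); castn; cnorm; field; exact: two_neq0.
move: D; rewrite /beta odd1; case: (odd `|J|%N) => /= D.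
  exact: (fin2 D).
exact: (fin1 D).
Qed.

End Core.

Unset Implicit Arguments.

Theorem lemma3p1 (C : numClosedFieldType) (V : lmodType C)
    (L Y M : int -> V -> V) (cc : V -> V)
    (x : int -> V) (a b b' : C) (f g : int -> int -> C) :
  is_Lhalf_module L Y M cc ->
  intermediate_series L Y M cc ->
  (forall v, cc v = 0) ->
  ((exists i v, Y i v != 0) \/ (exists n v, M n v != 0)) ->
  is_basis x ->
  (* Y_p x_k = f_{p,k} x_{k+p}, with p = i + 1/2, k = j/2 *)
  (forall i j, Y i (x j) = f i j *: x (j + 2 * i + 1)) ->
  (* M_n x_k = g_{n,k} x_{k+n} *)
  (forall n j, M n (x j) = g n j *: x (j + 2 * n)) ->
  (* L_n x_k = (a + k + b n) x_{k+n} for k in Z, (a + k + b' n) x_{k+n} for k in 1/2+Z *)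
  (forall n j, L n (x j) =
     (a + j%:~R / 2%:R + (if odd `|j|%N then b' else b) * n%:~R) *: x (j + 2 * n)) ->
  b' = b + 1 / 2%:R \/ b' = b - 1 / 2%:R \/
  (b = 0 /\ b' = 3%:R / 2%:R) \/ (b = 3%:R / 2%:R /\ b' = 0) \/
  (b = 1 /\ b' = - (1 / 2%:R)) \/ (b = - (1 / 2%:R) /\ b' = 1).
Proof. exact: main_sec. Qed.
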